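(* Let $w=(w(m))_{m\in2\mathbb{Z}}\in\ell^2(2\mathbb{Z})$ and $r(m)=\max(|w(m)|,|w(-m)|)$, $m\in2\mathbb{Z}$. For $n\in\mathbb{N}$, $s\ge2$ and $m\in n+2\mathbb{Z}$ define $$\sigma_2(n,s;m)=\sum_{j_1,\dots,j_s\neq\pm n}r(m+j_1)\,\frac{r(j_1+j_2)}{|n+j_2|}\cdots\frac{r(j_{s-2}+j_{s-1})}{|n+j_{s-1}|}\cdot\frac{r(j_{s-1}+j_s)}{|n^2-j_s^2|}$$ (for $s=2$ this is $\sum_{j_1,j_2\neq\pm n}r(m+j_1)\frac{r(j_1+j_2)}{|n^2-j_2^2|}$), where $j_1,\dots,j_s$ range over $n+2\mathbb{Z}\setminus\{n,-n\}$, and for $s\in\mathbb{N}$, $k\in n+2\mathbb{Z}$, $$\sigma_1(n,s;k)=\sum_{j_1,\dots,j_s\neq n}\frac{r(k+j_1)}{|n-j_1|}\cdot\frac{r(j_1+j_2)}{|n-j_2|}\cdots\frac{r(j_{s-1}+j_s)}{|n-j_s|}$$ with indices in $n+2\mathbb{Z}\setminus\{n\}$. Then $$\sigma_2(n,2;m)\le\|r\|^2\cdot\frac{2\log 6n}{n},$$ and for $s\ge3$, $$\sigma_2(n,s;m)\le\|r\|^2\cdot\frac{2\log 6n}{n}\cdot\sup_k\sigma_1(n,s-2;k).$$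
   Context: $\|r\|$ denotes the $\ell^2(2\mathbb{Z})$ norm of $r$; note $r(-m)=r(m)\ge0$. *)

(* Defs.v *)
From HB Require Import structures.
From mathcomp Require Import all_boot all_order all_algebra.
From mathcomp Require Import all_classical all_reals.
From mathcomp Require Import ereal topology normedtype sequences esum exp.
Set Implicit Arguments. Unset Strict Implicit. Unset Printing Implicit Defensive.
Import Order.TTheory GRing.Theory Num.Theory.
Local Open Scope classical_set_scope.
Local Open Scope ring_scope.

Section defs.
Variable R : realType.

Definition evens : set int := [set m | (2 %| m)%Z].
Definition coset2 (n : nat) : set int := [set j | (2 %| j - n%:Z)%Z].

Definition rfun (w : int -> R) (m : int) : R := Num.max `|w m| `|w (- m)|.

Definition l2norm2 (f : int -> R) : \bar R := \esum_(m in evens) ((f m) ^+ 2)%:E.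

(* sigma_2(n,s;m): tuple t = (j_1,...,j_s), t_i = j_{i+1} *)
Definition sigma2_term (w : int -> R) (n s : nat) (m : int) (t : s.-tuple int) : R :=
  let r := rfun w in
  let j := fun i => nth 0%Z t i in
  r (m + j 0%N)
  * (\prod_(0 <= i < s - 2) (r (j i + j i.+1) / `|(n%:Z + j i.+1)%:~R|))
  * (r (j (s - 2)%N + j (s - 1)%N)
       / `|((n%:Z) ^+ 2 - (j (s - 1)%N) ^+ 2)%:~R|).

Definition sigma2 (w : int -> R) (n s : nat) (m : int) : \bar R :=
  \esum_(t in [set t : s.-tuple int |
              forall i, (i < s)%N -> coset2 n (nth 0%Z t i)
                        /\ nth 0%Z t i <> n%:Z /\ nth 0%Z t i <> - n%:Z])
     (sigma2_term w n m t)%:E.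

Definition sigma1_term (w : int -> R) (n s : nat) (k : int) (t : s.-tuple int) : R :=
  let r := rfun w in
  let j := fun i => nth 0%Z t i in
  (r (k + j 0%N) / `|(n%:Z - j 0%N)%:~R|)
  * \prod_(0 <= i < s - 1) (r (j i + j i.+1) / `|(n%:Z - j i.+1)%:~R|).

Definition sigma1 (w : int -> R) (n s : nat) (k : int) : \bar R :=
  \esum_(t in [set t : s.-tuple int |
              forall i, (i < s)%N -> coset2 n (nth 0%Z t i) /\ nth 0%Z t i <> n%:Z])
     (sigma1_term w n k t)%:E.

End defs.

(* Main.v *)
Require Import Defs.
From HB Require Import structures.
From mathcomp Require Import all_boot all_order all_algebra finmap.
From mathcomp Require Import all_classical all_reals.
From mathcomp Require Import ereal topology normedtype sequences esum exp.
From mathcomp Require Import ring lra zify.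
Import Order.TTheory GRing.Theory Num.Theory.
Local Open Scope classical_set_scope.
Local Open Scope ring_scope.


Section gen.
Variable R : realType.

Lemma sub_sum (T : eqType) (s1 s2 : seq T) (F : T -> R) :
  uniq s1 -> {subset s1 <= s2} -> (forall x, 0 <= F x) ->
  \sum_(x <- s1) F x <= \sum_(x <- s2) F x.
Proof.
elim: s1 s2 => [|x s1 IH] s2 /=.
  by move=> _ _ F0; rewrite big_nil sumr_ge0.
case/andP => xs1 us1 sub F0.
have x2 : x \in s2 by apply: sub; rewrite mem_head.
rewrite big_cons (big_rem x x2) /= lerD2l; apply: IH => // y ys1.
apply: rem_mem; last by apply: sub; rewrite inE ys1 orbT.
by apply/eqP => yx; move: xs1; rewrite -yx ys1.
Qed.

End gen.

Fixpoint tuples (p : nat) (L : seq int) : seq (seq int) :=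
  if p is p'.+1 then [seq a :: t | a <- L, t <- tuples p' L] else [:: [::]].

Lemma tuples_size p L l : l \in tuples p L -> size l = p.
Proof.
elim: p l => [|p IH] l /=; first by rewrite inE => /eqP ->.
by case/allpairsP => [[a t] [_ /IH <- ->]].
Qed.

Lemma mem_tuples p L l : size l = p -> all (mem L) l -> l \in tuples p L.
Proof.
elim: p l => [|p IH] [|a l] //= [sz] /andP[aL lL].
by apply: (allpairs_f (fun a t => a :: t)) => //; apply: IH.
Qed.

Lemma tuples_uniq p L : uniq L -> uniq (tuples p L).
Proof.
move=> uL; elim: p => [|p IH] //=.
apply: allpairs_uniq => // [[a t]] [b u] _ _ /= [-> ->] //.
Qed.


Lemma tuples_all p L l : l \in tuples p L -> all (mem L) l.
Proof.
elim: p l => [|p IH] l /=; first by rewrite inE => /eqP ->.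
by case/allpairsP => [[a t] [aL /IH tL ->]] /=; rewrite aL.
Qed.


Section chains.
Variables (R : realType) (w : int -> R) (n : nat).

Let r := rfun w.

Lemma r_ge0 x : 0 <= r x.
Proof. by rewrite /r /rfun le_max normr_ge0. Qed.

Lemma rN x : r (- x) = r x.
Proof. by rewrite /r /rfun opprK maxC. Qed.

Definition Dp (b : int) : R := `|(n%:Z + b)%:~R|^-1.
Definition Dm (b : int) : R := `|(n%:Z - b)%:~R|^-1.
Definition E2 (b : int) : R := `|((n%:Z) ^+ 2 - b ^+ 2)%:~R|^-1.

Lemma Dp_ge0 b : 0 <= Dp b. Proof. by rewrite invr_ge0 normr_ge0. Qed.
Lemma Dm_ge0 b : 0 <= Dm b. Proof. by rewrite invr_ge0 normr_ge0. Qed.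
Lemma E2_ge0 b : 0 <= E2 b. Proof. by rewrite invr_ge0 normr_ge0. Qed.

Definition Op (L : seq int) (g f : int -> R) (a : int) : R :=
  \sum_(b <- L) r (a + b) * (g b * f b).

Fixpoint chain2 (a : int) (l : seq int) : R :=
  if l is b :: l' then
    (if l' is [::] then r (a + b) * E2 b else r (a + b) * Dp b * chain2 b l')
  else 1.

Fixpoint chain1 (a : int) (l : seq int) : R :=
  if l is b :: l' then r (a + b) * Dm b * chain1 b l' else 1.

Lemma chain2_core p j0 l : size l = p.+1 ->
  (\prod_(0 <= i < p) (r (nth 0%Z (j0 :: l) i + nth 0%Z (j0 :: l) i.+1)
        / `|(n%:Z + nth 0%Z (j0 :: l) i.+1)%:~R|))
  * (r (nth 0%Z (j0 :: l) p + nth 0%Z (j0 :: l) p.+1)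
       / `|((n%:Z) ^+ 2 - (nth 0%Z (j0 :: l) p.+1) ^+ 2)%:~R|)
  = chain2 j0 l.
Proof.
elim: p j0 l => [|p IH] j0 [|b l] //= [sz].
  by case: l sz => // _; rewrite big_geq // mul1r.
rewrite big_nat_recl //= -mulrA.
case: l sz => // c l sz.
rewrite -(IH b (c :: l)) //=.
Qed.

Lemma chain1_core p k l : size l = p.+1 ->
  (r (k + nth 0%Z l 0) / `|(n%:Z - nth 0%Z l 0)%:~R|)
  * \prod_(0 <= i < p) (r (nth 0%Z l i + nth 0%Z l i.+1)
        / `|(n%:Z - nth 0%Z l i.+1)%:~R|)
  = chain1 k l.
Proof.
elim: p k l => [|p IH] k [|b l] //= [sz].
  by case: l sz => // _; rewrite big_geq // !mulr1.
rewrite big_nat_recl //= -(IH b l) //= mulrA.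
Qed.

End chains.


Section paths.
Variables (R : realType) (w : int -> R) (n : nat).
Local Notation r := (rfun w).
Local Notation Op := (@Op R w).
Local Notation Dp := (@Dp R n).
Local Notation Dm := (@Dm R n).
Local Notation E2 := (@E2 R n).
Local Notation chain1 := (@chain1 R w n).
Local Notation chain2 := (@chain2 R w n).

Lemma sum_chain2 L p a : \sum_(l <- tuples p.+1 L) chain2 a l
  = iter p (Op L Dp) (Op L E2 (fun=> 1)) a.
Proof.
elim: p a => [|p IH] a.
  rewrite big_allpairs_dep /Op; apply: eq_bigr => b _.
  by rewrite big_seq1 /= mulr1.
rewrite iterS {1}/Op big_allpairs_dep; apply: eq_bigr => b _.
rewrite -IH mulr_sumr mulr_sumr big_seq [RHS]big_seq; apply: eq_bigr => l H.
have := @tuples_size p.+1 L l H.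
by case: l {H} => //= c l _; rewrite !mulrA.
Qed.

Lemma sum_chain1 L p k : \sum_(l <- tuples p L) chain1 k l
  = iter p (Op L Dm) (fun=> 1) k.
Proof.
elim: p k => [|p IH] k; first by rewrite /= big_seq1.
rewrite iterS {1}/Op big_allpairs_dep; apply: eq_bigr => b _.
by rewrite -IH mulr_sumr mulr_sumr; apply: eq_bigr => l _; rewrite !mulrA.
Qed.

Lemma iter_flip L p d :
  iter p (Op L Dp) (fun=> 1) d = iter p (Op (map -%R L) Dm) (fun=> 1) (- d).
Proof.
elim: p d => [|p IH] d //=.
rewrite /Op big_map; apply: eq_bigr => b _.
by rewrite IH -opprD rN /Dm /Dp opprK.
Qed.

Lemma Op_transpose L g h f :
  \sum_(a <- L) f a * Op L g h a = \sum_(b <- L) h b * (g b * Op L (fun=> 1) f b).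
Proof.
rewrite /Op.
under eq_bigr do rewrite big_distrr.
rewrite exchange_big; apply: eq_bigr => b _.
rewrite !big_distrr; apply: eq_bigr => a _ /=.
by rewrite addrC; ring.
Qed.

Definition P' L (f : int -> R) : int -> R := fun b => Dp b * Op L (fun=> 1) f b.

Lemma iter_rev L p f h :
  \sum_(a <- L) f a * iter p (Op L Dp) h a
  = \sum_(b <- L) h b * iter p (P' L) f b.
Proof.
elim: p f => [|p IH] f /=; first by apply: eq_bigr => a _; rewrite mulrC.
rewrite Op_transpose.
transitivity (\sum_(b <- L) P' L f b * iter p (Op L Dp) h b).
  by apply: eq_bigr => b _; rewrite mulrC.
by rewrite IH; apply: eq_bigr => b _; rewrite -iterSr.
Qed.

Lemma iter_link L p :
  Op L (fun=> 1) (iter p (P' L) Dp) = iter p.+1 (Op L Dp) (fun=> 1).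
Proof.
elim: p => [|p IH].
  by apply/funext => a; rewrite /= /Op; apply: eq_bigr => b _; rewrite mul1r mulr1.
rewrite iterS [RHS]iterS -IH; apply/funext => a; rewrite /Op /P'.
by apply: eq_bigr => b _; rewrite mul1r.
Qed.

End paths.


Section harm.
Variable R : realType.

Lemma ln_lb (x : R) : 0 < x -> 1 - x^-1 <= ln x.
Proof.
move=> x0; have := expR_ge1Dx (ln x^-1).
rewrite lnK ?posrE ?invr_gt0 // lnV ?posrE //; lra.
Qed.

Definition harm (k : nat) : R := \sum_(1 <= l < k.+1) (l%:R)^-1.

Lemma harm_le k : harm k.+1 <= 2 * ln (6 * k.+1%:R).
Proof.
elim: k => [|k IH].
  rewrite /harm big_nat1 invr1 mulr1.
  have := @ln_lb 6 (ltr0Sn _ 5); lra.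
rewrite /harm big_nat_recr //= -/(harm k.+1).
have h1 : (0 : R) < k.+1%:R by rewrite ltr0n.
have h2 : (0 : R) < k.+2%:R by rewrite ltr0n.
have e : (6 * k.+2%:R : R) = (6 * k.+1%:R) * (k.+2%:R / k.+1%:R).
  by field; rewrite gt_eqF.
rewrite e lnM ?posrE ?mulr_gt0 ?invr_gt0 //.
have hl := @ln_lb (k.+2%:R / k.+1%:R) (divr_gt0 h2 h1).
rewrite invf_div in hl.
have e2 : 1 - k.+1%:R / k.+2%:R = (k.+2%:R : R)^-1.
  by rewrite -[X in X - _](@divff _ k.+2%:R) ?gt_eqF // -mulrBl -natrB // subSnn div1r.
rewrite e2 in hl.
have : (0 : R) <= k.+2%:R^-1 by rewrite invr_ge0 ltW.
move=> hh; rewrite mulrDr; apply: lerD; first exact: IH.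
apply: (le_trans hl); rewrite ler_peMl //; first exact: le_trans hh hl.
lra.
Qed.

Lemma harm_tel (m : nat) (M : nat) :
  \sum_(1 <= l < M.+1) ((l%:R : R)^-1 - ((m + l)%N%:R)^-1)
  = harm m - \sum_(1 <= l < m.+1) (((M + l)%N%:R : R)^-1).
Proof.
elim: M => [|M IH].
  rewrite big_geq // /harm [X in _ - X](eq_bigr (fun l => (l%:R : R)^-1)) ?subrr //.
rewrite big_nat_recr //= IH.
case: m IH => [|m] IH.
  by rewrite !big_geq // add0n subrr addr0.
have hA : \sum_(1 <= l < m.+2) (((M + l)%N%:R : R)^-1)
   = (M.+1%:R)^-1 + \sum_(1 <= l < m.+1) (((M.+1 + l)%N%:R : R)^-1).
  by rewrite big_nat_recl //; congr (_ + _); [rewrite addn1|apply: eq_bigr => i _; rewrite addnS addSn].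
have hB : \sum_(1 <= l < m.+2) (((M.+1 + l)%N%:R : R)^-1)
   = \sum_(1 <= l < m.+1) (((M.+1 + l)%N%:R : R)^-1) + ((m.+1 + M.+1)%N%:R)^-1.
  by rewrite big_nat_recr //= addnC.
rewrite hA hB; ring.
Qed.

End harm.


Section hb.
Variables (R : realType) (n : nat).
Hypothesis hn : (0 < n)%N.

Lemma E2E b : @E2 R n b = ((`|(n%:Z) ^+ 2 - b ^+ 2|%N)%:R)^-1.
Proof. by rewrite /E2 natr_absz intr_norm. Qed.

Lemma mid_sum_le :
  \sum_(1 <= l < n) ((l%:R * (n - l)%N%:R)^-1 : R) <= 2 / n%:R * harm R n.
Proof.
have e : forall l, (1 <= l < n)%N ->
   ((l%:R * (n - l)%N%:R)^-1 : R) = n%:R^-1 * (l%:R^-1 + (n - l)%N%:R^-1).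
  move=> l /andP[l1 ln].
  have h1 : (l%:R : R) != 0 by rewrite pnatr_eq0 -lt0n.
  have h2 : ((n - l)%N%:R : R) != 0 by rewrite pnatr_eq0 subn_eq0 -ltnNge.
  have h3 : (n%:R : R) != 0 by rewrite pnatr_eq0 -lt0n.
  have hs : (n%:R : R) = l%:R + (n - l)%N%:R by rewrite -natrD subnKC // ltnW.
  rewrite hs; move: h1 h2 h3; rewrite hs.
  move: (l%:R : R) ((n - l)%N%:R : R) => a c h1 h2 h3.
  by field; rewrite h1 h2 h3.
have -> : \sum_(1 <= l < n) ((l%:R * (n - l)%N%:R)^-1 : R)
   = n%:R^-1 * (\sum_(1 <= l < n) (l%:R : R)^-1 + \sum_(1 <= l < n) ((n - l)%N%:R : R)^-1).
  rewrite -big_split mulr_sumr /= big_nat [RHS]big_nat.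
  by apply: eq_bigr => l hl; rewrite e.
have -> : \sum_(1 <= l < n) ((n - l)%N%:R : R)^-1 = \sum_(1 <= l < n) (l%:R : R)^-1.
  rewrite big_nat_rev /= big_nat [RHS]big_nat; apply: eq_bigr => l /andP[l1 ln].
  by congr (_%:R^-1); lia.
have hh : \sum_(1 <= l < n) (l%:R : R)^-1 <= harm R n.
  rewrite /harm big_nat_recr //= lerDl invr_ge0 ler0n //.
apply: (@le_trans _ _ (n%:R^-1 * (harm R n + harm R n))).
  by rewrite ler_wpM2l ?invr_ge0 ?ler0n // lerD.
by rewrite le_eqVlt; apply/orP; left; apply/eqP; ring.
Qed.

Lemma up_sum_le M :
  \sum_(1 <= l < M.+1) ((l%:R * (n + l)%N%:R)^-1 : R) <= harm R n / n%:R.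
Proof.
have e : forall l, (1 <= l < M.+1)%N ->
   ((l%:R * (n + l)%N%:R)^-1 : R) = n%:R^-1 * (l%:R^-1 - (n + l)%N%:R^-1).
  move=> l /andP[l1 _].
  have h1 : (l%:R : R) != 0 by rewrite pnatr_eq0 -lt0n.
  have h3 : (n%:R : R) != 0 by rewrite pnatr_eq0 -lt0n.
  have h2 : (n%:R + l%:R : R) != 0 by rewrite -natrD pnatr_eq0 addn_eq0 negb_and -!lt0n hn.
  rewrite natrD; move: h1 h2 h3; move: (l%:R : R) (n%:R : R) => a c h1 h2 h3.
  by field; rewrite h1 h2 h3.
rewrite big_nat (eq_bigr _ e) -big_nat -mulr_sumr harm_tel mulrC ler_wpM2r ?invr_ge0 ?ler0n //.
by rewrite lerBlDr lerDl sumr_ge0 // => i _; rewrite invr_ge0 ler0n.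
Qed.

Definition v2 (b : int) : bool := [&& (2 %| b - n%:Z)%Z, b != n%:Z & b != - n%:Z].

Lemma le_sum_mem (L : seq int) x : x \in L -> (`|x| <= \sum_(b <- L) `|b|)%N.
Proof. by move=> xL; rewrite (big_rem x xL) /= leq_addr. Qed.

Lemma hb_main (L : seq int) : uniq L -> (forall b, b \in L -> v2 b) ->
  \sum_(b <- L) @E2 R n b <= 2 * ln (6 * n%:R) / n%:R.
Proof.
move=> uL vL.
set M := (\sum_(b <- L) `|b|)%N.
set W1 := [seq ((n + 2 * l)%N)%:Z | l <- index_iota 1 M.+1].
set W2 := [seq - ((n + 2 * l)%N)%:Z | l <- index_iota 1 M.+1].
set W3 := [seq n%:Z - ((2 * l)%N)%:Z | l <- index_iota 1 n].
apply: (@le_trans _ _ (\sum_(b <- W1 ++ W2 ++ W3) @E2 R n b)).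
  apply: sub_sum => //; last by move=> x; exact: E2_ge0.
  move=> b bL; have := vL b bL; have := @le_sum_mem L b bL; rewrite -/M.
  move=> bM /and3P[/dvdzP[q hq] bn bmn].
  have qn0 : q != 0 by apply: contra bn => /eqP q0; apply/eqP; lia.
  have qnn : q != - n%:Z by apply: contra bmn => /eqP q0; apply/eqP; lia.
  rewrite !mem_cat.
  case: (ltrP 0 q) => [q0|q0].
    apply/orP; left; apply/mapP; exists `|q|%N; first by rewrite mem_index_iota; lia.
    lia.
  case: (ltrP q (- n%:Z)) => [q1|q1].
    apply/orP; right; apply/orP; left; apply/mapP; exists (absz (q + n%:Z)).
      by rewrite mem_index_iota; lia.
    lia.
  apply/orP; right; apply/orP; right; apply/mapP; exists `|q|%N.
    by rewrite mem_index_iota; lia.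
  lia.
rewrite !big_cat !big_map /=.
have e1 : \sum_(l <- index_iota 1 M.+1) @E2 R n ((n + 2 * l)%N)%:Z
    = 4^-1 * \sum_(1 <= l < M.+1) ((l%:R * (n + l)%N%:R)^-1 : R).
  rewrite mulr_sumr big_nat [RHS]big_nat; apply: eq_bigr => l /andP[l1 _].
  rewrite E2E; have -> : (absz ((n%:Z) ^+ 2 - ((n + 2 * l)%N)%:Z ^+ 2) = (4 * (l * (n + l)))%N) by lia.
  by rewrite !natrM invfM.
have e2 : \sum_(l <- index_iota 1 M.+1) @E2 R n (- ((n + 2 * l)%N)%:Z)
    = 4^-1 * \sum_(1 <= l < M.+1) ((l%:R * (n + l)%N%:R)^-1 : R).
  rewrite -e1; apply: eq_bigr => l _; by rewrite /E2 sqrrN.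
have e3 : \sum_(l <- index_iota 1 n) @E2 R n (n%:Z - ((2 * l)%N)%:Z)
    = 4^-1 * \sum_(1 <= l < n) ((l%:R * (n - l)%N%:R)^-1 : R).
  rewrite mulr_sumr big_nat [RHS]big_nat; apply: eq_bigr => l /andP[l1 ln].
  rewrite E2E; have -> : (absz ((n%:Z) ^+ 2 - (n%:Z - ((2 * l)%N)%:Z) ^+ 2) = (4 * (l * (n - l)))%N) by nia.
  by rewrite !natrM invfM.
rewrite e1 e2 e3.
have u := up_sum_le M; have m := mid_sum_le.
have hH : harm R n <= 2 * ln (6 * n%:R) by case: n hn {u m e1 e2 e3 W1 W2 W3 vL} => // k _; exact: harm_le.
have n0 : (0 : R) < n%:R by rewrite ltr0n.
apply: (@le_trans _ _ (harm R n / n%:R)).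
  apply: (@le_trans _ _ (4^-1 * (harm R n / n%:R) + (4^-1 * (harm R n / n%:R) + 4^-1 * (2 / n%:R * harm R n)))).
    by rewrite !lerD // ler_wpM2l.
  by rewrite le_eqVlt; apply/orP; left; apply/eqP; field; rewrite gt_eqF.
by rewrite ler_wpM2r // invr_ge0 ltW.
Qed.

End hb.


Section core.
Variables (R : realType) (w : int -> R) (n : nat) (m : int).
Local Notation r := (rfun w).
Local Notation Op := (@Op R w).
Local Notation Dp := (@Dp R n).
Local Notation Dm := (@Dm R n).
Local Notation E2 := (@E2 R n).

Lemma Op_ge0 L g f a : (forall b, 0 <= g b) -> (forall b, 0 <= f b) -> 0 <= Op L g f a.
Proof.
move=> g0 f0; rewrite /Op sumr_ge0 // => b _.
by rewrite !mulr_ge0 // r_ge0.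
Qed.

Lemma iter_ge0 L p g h a : (forall b, 0 <= g b) -> (forall b, 0 <= h b) ->
  0 <= iter p (Op L g) h a.
Proof.
move=> g0 h0; elim: p a => [|p IH] a //=; exact: Op_ge0.
Qed.

Variables (L : seq int) (Q : R).
Hypothesis hQ : forall b, b \in L -> Op L (fun=> 1) (fun a => r (m + a)) b <= Q.

Lemma K0 : \sum_(a <- L) r (m + a) * Op L E2 (fun=> 1) a <= Q * \sum_(b <- L) E2 b.
Proof.
rewrite Op_transpose mulr_sumr big_seq [X in _ <= X]big_seq.
apply: ler_sum => b bL; rewrite mul1r [X in _ <= X]mulrC ler_wpM2l ?E2_ge0 //; exact: hQ.
Qed.

Lemma K1 q : \sum_(a <- L) r (m + a) * iter q.+1 (Op L Dp) (Op L E2 (fun=> 1)) a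
  <= Q * \sum_(d <- L) E2 d * iter q.+1 (Op L Dp) (fun=> 1) d.
Proof.
rewrite iterS Op_transpose.
apply: (@le_trans _ _ (Q * \sum_(b <- L) Dp b * iter q (Op L Dp) (Op L E2 (fun=> 1)) b)).
  rewrite mulr_sumr big_seq [X in _ <= X]big_seq; apply: ler_sum => b bL.
  rewrite mulrCA mulrA [X in _ <= X]mulrC ler_wpM2l //; last exact: hQ.
  rewrite mulr_ge0 ?Dp_ge0 //.
  by apply: iter_ge0 => x; [exact: Dp_ge0|apply: Op_ge0 => // y; exact: E2_ge0].
rewrite (_ : \sum_(b <- L) Dp b * iter q (Op L Dp) (Op L E2 (fun=> 1)) b
   = \sum_(d <- L) E2 d * iter q.+1 (Op L Dp) (fun=> 1) d) //.
rewrite iter_rev.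
rewrite (_ : \sum_(b <- L) Op L E2 (fun=> 1) b * iter q (@P' R w n L) Dp b
   = \sum_(b <- L) iter q (@P' R w n L) Dp b * Op L E2 (fun=> 1) b); last first.
  by apply: eq_bigr => b _; rewrite mulrC.
rewrite Op_transpose -iter_link.
by apply: eq_bigr => d _; rewrite mul1r.
Qed.

End core.


Section glue.
Variables (R : realType) (w : int -> R) (n : nat) (m : int).
Hypothesis hm : coset2 n m.
Local Notation r := (rfun w).
Local Notation Op := (@Op R w).
Local Notation Dp := (@Dp R n).
Local Notation Dm := (@Dm R n).
Local Notation E2 := (@E2 R n).

Definition term2 (s : nat) (t : seq int) : R :=
  let j := fun i => nth 0%Z t i in
  r (m + j 0%N)
  * (\prod_(0 <= i < s - 2) (r (j i + j i.+1) / `|(n%:Z + j i.+1)%:~R|))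
  * (r (j (s - 2)%N + j (s - 1)%N)
       / `|((n%:Z) ^+ 2 - (j (s - 1)%N) ^+ 2)%:~R|).

Lemma term2E s (t : s.-tuple int) : sigma2_term w n m t = term2 s t.
Proof. by []. Qed.

Lemma term2_ge0 s t : 0 <= term2 s t.
Proof.
rewrite /term2 !mulr_ge0 ?r_ge0 ?invr_ge0 ?normr_ge0 //.
by apply: prodr_ge0 => i _; rewrite divr_ge0 ?r_ge0 ?normr_ge0.
Qed.

Lemma sum_term2 L p : \sum_(l <- tuples p.+2 L) term2 p.+2 l
  = \sum_(a <- L) r (m + a) * iter p (Op L Dp) (Op L E2 (fun=> 1)) a.
Proof.
rewrite big_allpairs_dep; apply: eq_bigr => a _.
rewrite -sum_chain2 mulr_sumr big_seq [RHS]big_seq; apply: eq_bigr => l H.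
have sz := @tuples_size p.+1 L l H.
rewrite /term2 /= !subSS !subn0 -mulrA.
by rewrite (@chain2_core R w n p a l sz).
Qed.

Definition Es L := [seq m + j | j <- L] ++ [seq i + j | i <- L, j <- L].
Definition QQ L := \sum_(e <- undup (Es L)) r e ^+ 2.

Lemma QQ_ge0 L : 0 <= QQ L.
Proof. by rewrite /QQ sumr_ge0 // => e _; rewrite sqr_ge0. Qed.

Lemma amgm (x y : R) : x * y <= (x ^+ 2 + y ^+ 2) / 2.
Proof. have := sqr_ge0 (x - y); rewrite sqrrB mulr2n; lra. Qed.

Lemma hQ L : uniq L -> forall b, b \in L -> Op L (fun=> 1) (fun a => r (m + a)) b <= QQ L.
Proof.
move=> uL b bL; rewrite /Op.
apply: (@le_trans _ _ (\sum_(a <- L) (r (b + a) ^+ 2 + r (m + a) ^+ 2) / 2)).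
  by apply: ler_sum => a _; rewrite mul1r amgm.
rewrite -mulr_suml big_split /=.
have s1 : \sum_(a <- L) r (b + a) ^+ 2 <= QQ L.
  rewrite -(big_map (fun a => b + a) xpredT (fun e => r e ^+ 2)).
  apply: sub_sum; first by rewrite map_inj_uniq // => x y /addrI.
    move=> e /mapP[a aL ->]; rewrite mem_undup mem_cat; apply/orP; right.
    exact: (allpairs_f (fun i j => i + j)).
  by move=> x; rewrite sqr_ge0.
have s2 : \sum_(a <- L) r (m + a) ^+ 2 <= QQ L.
  rewrite -(big_map (fun a => m + a) xpredT (fun e => r e ^+ 2)).
  apply: sub_sum; first by rewrite map_inj_uniq // => x y /addrI.
    move=> e /mapP[a aL ->]; rewrite mem_undup mem_cat; apply/orP; left.
    exact: map_f.
  by move=> x; rewrite sqr_ge0.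
lra.
Qed.

Lemma QQ_le L : (forall b, b \in L -> coset2 n b) -> ((QQ L)%:E <= l2norm2 r)%E.
Proof.
move=> cL; apply: esum_ge; exists [set` undup (Es L)].
  split; first exact: finite_seq.
  move=> e /=; rewrite mem_undup mem_cat => /orP[/mapP[j jL ->]|/allpairsP[[i j] [iL jL ->]]] /=.
    have := cL j jL; rewrite /coset2 /evens /= => /dvdzP[q1 h1].
    move: hm; rewrite /coset2 /= => /dvdzP[q2 h2].
    by apply/dvdzP; exists (q1 + q2 + n%:Z); lia.
  have := cL j jL; rewrite /coset2 /evens /= => /dvdzP[q1 h1].
  have := cL i iL; rewrite /coset2 /= => /dvdzP[q2 h2].
  by apply/dvdzP; exists (q1 + q2 + n%:Z); lia.
by rewrite -fsbig_seq ?undup_uniq // sumEFin.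
Qed.

End glue.


Section s1.
Variables (R : realType) (w : int -> R) (n : nat).
Local Notation r := (rfun w).
Local Notation Op := (@Op R w).
Local Notation Dp := (@Dp R n).

Definition term1 (s : nat) (k : int) (t : seq int) : R :=
  let j := fun i => nth 0%Z t i in
  (r (k + j 0%N) / `|(n%:Z - j 0%N)%:~R|)
  * \prod_(0 <= i < s - 1) (r (j i + j i.+1) / `|(n%:Z - j i.+1)%:~R|).

Lemma sigma1_lb L p d : uniq L -> (forall b, b \in L -> v2 n b) ->
  ((iter p.+1 (Op L Dp) (fun=> 1) d)%:E <= sigma1 w n p.+1 (- d))%E.
Proof.
move=> uL vL.
rewrite iter_flip -sum_chain1.
set L1 := map -%R L.
have uL1 : uniq L1 by rewrite map_inj_uniq //; exact: oppr_inj.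
pose ys : seq (p.+1.-tuple int) := pmap insub (tuples p.+1 L1).
have uys : uniq ys by apply: pmap_sub_uniq; exact: tuples_uniq.
have mv : map val ys = tuples p.+1 L1.
  rewrite pmap_filter; last exact: insubK.
  apply/all_filterP/allP => l H; rewrite isSome_insub.
  by rewrite (@tuples_size _ _ _ H).
apply: esum_ge; exists [set` ys].
  split; first exact: finite_seq.
  move=> t /=; rewrite mem_pmap_sub => /tuples_all /allP tL i ip.
  have : nth 0%Z t i \in L1 by apply: tL; rewrite mem_nth // size_tuple.
  case/mapP => b bL ->.
  case/and3P: (vL b bL) => /dvdzP[q hq] bn bmn.
  split.
    by rewrite /coset2 /=; apply/dvdzP; exists (- q - n%:Z); lia.
  by move=> h; move/eqP: bmn; apply; lia.
rewrite -fsbig_seq // sumEFin lee_fin.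
rewrite -mv big_map big_seq [X in _ <= X]big_seq.
apply: ler_sum => t _.
have sz : size t = p.+1 by rewrite size_tuple.
rewrite -(@chain1_core R w n p (- d) t sz).
by rewrite /sigma1_term /= subSS subn0.
Qed.

End s1.


Section fin.
Variables (R : realType) (w : int -> R) (n : nat) (m : int).
Local Notation r := (rfun w).
Local Notation Op := (@Op R w).
Local Notation Dp := (@Dp R n).
Local Notation E2 := (@E2 R n).

Lemma main_fin p (X : set (p.+2.-tuple int)) :
  fsets [set t : p.+2.-tuple int |
              forall i, (i < p.+2)%N -> coset2 n (nth 0%Z t i)
                        /\ nth 0%Z t i <> n%:Z /\ nth 0%Z t i <> - n%:Z] X ->
  exists L, [/\ uniq L, (forall b, b \in L -> v2 n b) &
    (\sum_(t \in X) (sigma2_term w n m t)%:E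
      <= (\sum_(a <- L) r (m + a) * iter p (Op L Dp) (Op L E2 (fun=> 1)) a)%:E)%E].
Proof.
case=> finX XD.
set ts := fset_set X.
exists [seq j <- undup (flatten (map val ts)) | v2 n j]; split.
- by rewrite filter_uniq // undup_uniq.
- by move=> b; rewrite mem_filter => /andP[].
rewrite fsbig_finite // sumEFin lee_fin -(@sum_term2 R w n m).
rewrite -(big_map val xpredT (@term2 R w n m p.+2)).
apply: sub_sum; last by move=> l; exact: term2_ge0.
  by rewrite map_inj_uniq ?fset_uniq //; exact: val_inj.
move=> l /mapP[t tts ->].
have Xt : X t by move: tts; rewrite in_fset_set // inE.
have Dt := XD t Xt.
apply: mem_tuples; first by rewrite size_tuple.
apply/allP => x xt.
have [i ip ex] : exists2 i, (i < p.+2)%N & nth 0%Z t i = x.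
  by move/(nthP 0%Z): xt; rewrite size_tuple.
suff : x \in [seq j <- undup (flatten (map val ts)) | v2 n j] by [].
rewrite mem_filter; apply/andP; split.
  have [h1 [h2 h3]] := Dt i ip; rewrite -ex.
  by apply/and3P; split => //; apply/eqP.
rewrite mem_undup; apply/flatten_mapP; exists t => //.
Qed.

End fin.


Lemma fin_comb (R : realType) (T Q Zs c : R) (N S : \bar R) :
  0 <= Q -> T <= Q * Zs -> (Q%:E <= N)%E -> (Zs%:E <= c%:E * S)%E -> 0 <= c -> (0 <= S)%E ->
  (T%:E <= N * c%:E * S)%E.
Proof.
move=> Q0 TQ QN ZS c0 S0.
apply: (@le_trans _ _ ((Q * Zs)%:E)); first by rewrite lee_fin.
rewrite EFinM -muleA.
apply: (@le_trans _ _ (Q%:E * (c%:E * S))%E); first by rewrite lee_wpmul2l.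
by rewrite lee_wpmul2r // mule_ge0.
Qed.

Lemma Zs_bound (R : realType) (L : seq int) (E I : int -> R) (c : R) (S : \bar R) :
  0 < c -> (forall d, 0 <= E d) -> \sum_(d <- L) E d <= c ->
  (forall d, d \in L -> ((I d)%:E <= S)%E) -> (0 <= S)%E ->
  ((\sum_(d <- L) E d * I d)%:E <= c%:E * S)%E.
Proof.
move=> c0 E0 EL IS S0.
case: S IS S0 => [Sr| |] IS S0 //; last by rewrite gt0_muley ?lte_fin // leey.
rewrite -EFinM lee_fin.
apply: (@le_trans _ _ (\sum_(d <- L) E d * Sr)).
  rewrite big_seq [X in _ <= X]big_seq; apply: ler_sum => d dL.
  by rewrite ler_wpM2l //; have := IS d dL; rewrite lee_fin.
by rewrite -mulr_suml ler_wpM2r.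
Qed.

Lemma v2_coset n b : v2 n b -> coset2 n b.
Proof. by case/and3P. Qed.

Theorem lemma4 (R : realType) (w : int -> R) (n : nat) (m : int)
  (hw : (l2norm2 w < +oo)%E) (hn : (0 < n)%N) (hm : coset2 n m) :
  (sigma2 w n 2 m <= l2norm2 (rfun w) * (2 * ln (6 * n%:R) / n%:R)%:E)%E /\
  (forall s : nat, (3 <= s)%N ->
     (sigma2 w n s m <= l2norm2 (rfun w) * (2 * ln (6 * n%:R) / n%:R)%:E
        * ereal_sup [set sigma1 w n (s - 2) k | k in coset2 n])%E).
Proof.
set c := 2 * ln (6 * n%:R) / n%:R.
have c0 : 0 < c.
  rewrite /c divr_gt0 ?ltr0n // mulr_gt0 // ln_gt0 //.
  by rewrite -natrM ltr1n; lia.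
split.
  rewrite /sigma2 /esum; apply: ge_ereal_sup => _ [X HX <-].
  have [L [uL vL HL]] := @main_fin R w n m 0 X HX.
  apply: (le_trans HL) => /=.
  have K := @K0 R w n m L (@QQ R w m L) (@hQ R w m L uL).
  have hb := @hb_main R n hn L uL vL.
  have QN := @QQ_le R w n m hm L (fun b bL => @v2_coset n b (vL b bL)).
  apply: (@le_trans _ _ ((@QQ R w m L)%:E * c%:E)%E); last first.
    by rewrite lee_wpmul2r // lee_fin ltW.
  rewrite -EFinM lee_fin; apply: (le_trans K).
  by rewrite ler_wpM2l // ?QQ_ge0 //.
move=> [|[|[|q]]] // _.
set S := ereal_sup _.
have S0 : (0 <= S)%E.
  apply: (@le_trans _ _ (sigma1 w n (q.+3 - 2) n%:Z)).
    apply: esum_ge0 => t _; rewrite lee_fin /sigma1_term mulr_ge0 //.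
      by rewrite divr_ge0 ?normr_ge0 // r_ge0.
    by apply: prodr_ge0 => i _; rewrite divr_ge0 ?normr_ge0 // r_ge0.
  apply: ereal_sup_ubound; exists n%:Z => //.
  by rewrite /coset2 /= subrr dvdz0.
rewrite /sigma2 /esum; apply: ge_ereal_sup => _ [X HX <-].
have [L [uL vL HL]] := @main_fin R w n m q.+1 X HX.
apply: (le_trans HL).
have K := @K1 R w n m L (@QQ R w m L) (@hQ R w m L uL) q.
have hb := @hb_main R n hn L uL vL.
have QN := @QQ_le R w n m hm L (fun b bL => @v2_coset n b (vL b bL)).
apply: (@fin_comb R _ _ _ _ _ _ (@QQ_ge0 R w m L) K QN) => //; last exact: ltW.
apply: Zs_bound => //; first exact: E2_ge0.
move=> d dL; apply: (le_trans (@sigma1_lb R w n L q d uL vL)).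
apply: ereal_sup_ubound; exists (- d) => //.
case/and3P: (vL d dL) => /dvdzP[k hk] _ _.
by rewrite /coset2 /=; apply/dvdzP; exists (- k - n%:Z); lia.
Qed.
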